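(* Let $p$ be a prime and $w,e\in\mathbb Z_{\ge0}$. Let $\mathcal W=\{g\in S_p\wr S_w: C_{S_{pw+e}}(g_p)\le (S_p\wr S_w)\times S_e\}$, where $g_p$ denotes the $p$-part of $g$. If $e=0$ then $\mathcal W=\mathcal U_{w-1}$, and if $e>0$ then $\mathcal W=\mathcal U_w$.
   Context: $S_{pw+e}$ acts on $[1,pw+e]$; $S_p\wr S_w$ is the subgroup of permutations fixing $pw+1,\dots,pw+e$ and stabilising the family $\{[1,p],[p+1,2p],\dots,[(w-1)p+1,wp]\}$; $S_e$ is the group of permutations of $\{pw+1,\dots,pw+e\}$. Elements of $S_p\wr S_w$ are written $(x_1,\dots,x_w;\sigma)$ ($x_i\in S_p$, $\sigma\in S_w$), with multiplication $(x_1,\dots,x_w;\sigma)(y_1,\dots,y_w;\tau)=(x_1y_{\sigma^{-1}(1)},\dots,x_wy_{\sigma^{-1}(w)};\sigma\tau)$. A marked cycle in $S_w$ is either a non-identity cycle (its support being the set of moved points) or an element $j\in[1,w]$ (support $\{j\}$, treated as the identity permutation); its order $o(\sigma)$ is the size of its support. For a marked cycle $\sigma$ with smallest support element $i$ and $x\in S_p$, $y_\sigma(x)=(1,\dots,1,x,1,\dots,1;\sigma)$ with $x$ in position $i$. Every $h\in S_p\wr S_w$ is conjugate in $S_p\wr S_w$ to some $y_{\sigma_1}(x_1)\cdots y_{\sigma_r}(x_r)$ where $\sigma_1,\dots,\sigma_r$ are marked cycles whose supports partition $[1,w]$; $\operatorname{tp}^{\mathrm{wr}}_p(h)$ is the partition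 formed by the numbers $o(\sigma_l)$ for those $l$ with $x_l$ a $p$-cycle (this is well defined). For $s\in\mathbb Z$, $\mathcal U_s=\{h\in S_p\wr S_w: |\operatorname{tp}^{\mathrm{wr}}_p(h)|\ge s\}$. *)

(* Defs.v *)
From mathcomp Require Import all_boot fingroup perm pgroup.
Unset Printing Implicit Defensive.

(* Points [1, pw+e] of the paper are represented by 'I_(p*w+e) = {0,...,pw+e-1};
   block i (i : 'I_w) is {x | x %/ p = i} = [ip, ip+p-1], tail is {x | pw <= x}. *)

Definition blk (p w e : nat) (i : 'I_w) : {set 'I_(p * w + e)} :=
  [set x : 'I_(p * w + e) | x %/ p == i].

Definition blk_family (p w e : nat) : {set {set 'I_(p * w + e)}} :=
  [set blk p w e i | i : 'I_w].

Definition wr (p w e : nat) : {set {perm 'I_(p * w + e)}} :=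
  [set s : {perm 'I_(p * w + e)} |
     [forall x : 'I_(p * w + e), (p * w <= x) ==> (s x == x)] &&
     ([set (s @: B) | B : {set 'I_(p * w + e)} in blk_family p w e] == blk_family p w e)].

Definition symE (p w e : nat) : {set {perm 'I_(p * w + e)}} :=
  [set s : {perm 'I_(p * w + e)} | [forall x : 'I_(p * w + e), (x < p * w) ==> (s x == x)]].

(* g is the permutation (xs_1,...,xs_w ; sg), i.e. point (block i, position a)
   goes to (block sg i, position xs_(sg i) a); tail points are fixed. *)
Definition wr_elt (p w e : nat) (g : {perm 'I_(p * w + e)})
  (xs : {ffun 'I_w -> {perm 'I_p}}) (sg : {perm 'I_w}) : bool :=
  [forall x : 'I_(p * w + e), (p * w <= x) ==> (g x == x)] &&
  [forall i : 'I_w, forall a : 'I_p, forall x : 'I_(p * w + e),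
     (val x == p * i + a) ==> (val (g x) == p * sg i + xs (sg i) a)].

Definition is_pcycle (p : nat) (x : {perm 'I_p}) : bool :=
  [exists a : 'I_p, #|porbit x a| == p].

Definition orbit_min (w : nat) (sg : {perm 'I_w}) (i : 'I_w) : bool :=
  [forall j in porbit sg i, i <= j].

(* U_s = { h in S_p wr S_w : |tp^wr_p(h)| >= s }, where h is conjugate in
   S_p wr S_w to y_{s_1}(x_1)...y_{s_r}(x_r) = (xs ; sg) with xs supported on
   the orbit minima of sg, and |tp| = sum of the orders of the marked cycles
   whose label is a p-cycle. *)
Definition Uset (p w e : nat) (s : nat) : {set {perm 'I_(p * w + e)}} :=
  [set h in wr p w e |
    [exists k in wr p w e, exists xs : {ffun 'I_w -> {perm 'I_p}},
      exists sg : {perm 'I_w},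
      [&& wr_elt p w e (h ^ k)%g xs sg,
          [forall i : 'I_w, ~~ orbit_min w sg i ==> (xs i == 1%g)] &
          (s <= \sum_(i : 'I_w | orbit_min w sg i && is_pcycle p (xs i))
                   #|porbit sg i|)]]].

Definition calW (p w e : nat) : {set {perm 'I_(p * w + e)}} :=
  [set g in wr p w e | ('C[g.`_p] \subset wr p w e * symE p w e)%g].

(* Main.v *)
Require Import Defs.
From mathcomp Require Import all_boot fingroup perm pgroup zify.
Set Implicit Arguments. Unset Strict Implicit.

Section Orb.
Variable T : finType.
Implicit Types (s : {perm T}) (x y : T).

Lemma orb_gt0 s x : 0 < #|porbit s x|.
Proof. by rewrite lt0n card_porbit_neq0. Qed.

Lemma orb_mulX s x q : ((s ^+ (q * #|porbit s x|))%g x) = x.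
Proof.
elim: q => [|q IH]; first by rewrite mul0n expg0 perm1.
by rewrite mulSn expgD permM [(s ^+ #|porbit s x|)%g x]permX iter_porbit IH.
Qed.

Lemma orb_modX s x k : (s ^+ k)%g x = (s ^+ (k %% #|porbit s x|))%g x.
Proof.
by rewrite {1}(divn_eq k #|porbit s x|) expgD permM orb_mulX.
Qed.

Lemma orb_fix s x k : ((s ^+ k)%g x == x) = (#|porbit s x| %| k).
Proof.
apply/eqP/idP; last by move/dvdnP => [q ->]; exact: orb_mulX.
rewrite orb_modX /dvdn => H; apply/eqP.
have Hl := ltn_pmod k (orb_gt0 s x).
have U := uniq_traject_porbit s x.
have := nth_traject s Hl x; rewrite -permX H => E.
have E0 : nth x (traject s x #|porbit s x|) 0 = x by rewrite nth_traject ?orb_gt0.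
by apply/eqP; rewrite -(@nth_uniq _ x _ _ 0 _ _ U) ?size_traject ?orb_gt0 // E E0.
Qed.



Lemma gcd_gt0l a L : 0 < L -> 0 < gcdn a L.
Proof. by move=> H; rewrite gcdn_gt0 H orbT. Qed.

Lemma coprime_divg a L : 0 < L -> coprime (a %/ gcdn a L) (L %/ gcdn a L).
Proof.
move=> HL; have Hd : 0 < gcdn a L := gcd_gt0l a HL.
rewrite /coprime -(eqn_pmul2r Hd) mul1n muln_gcdl !divnK ?dvdn_gcdl ?dvdn_gcdr //.
Qed.

Lemma dvd_mul_gcd a L t : 0 < L -> (L %| a * t) = (L %/ gcdn a L %| t).
Proof.
move=> HL; set d := gcdn a L; have Hd : 0 < d := gcd_gt0l a HL.
have EL : L = L %/ d * d by rewrite divnK // dvdn_gcdr.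
have Ea : a = a %/ d * d by rewrite divnK // dvdn_gcdl.
rewrite {1}EL {1}Ea mulnAC dvdn_pmul2r // Gauss_dvdr //.
by rewrite coprime_sym /d coprime_divg.
Qed.

Lemma card_orbX s x a : #|porbit (s ^+ a)%g x| = #|porbit s x| %/ gcdn a #|porbit s x|.
Proof.
have HL := orb_gt0 s x.
apply/eqP; rewrite eqn_dvd; apply/andP; split.
- by rewrite -orb_fix -expgM orb_fix dvd_mul_gcd.
- by rewrite -dvd_mul_gcd // -orb_fix expgM orb_fix.
Qed.
End Orb.

Section Restr.
Variable T : finType.
Variables (s : {perm T}) (x : T).

Lemma porbit_step y : y \in porbit s x -> s y \in porbit s x.
Proof.
rewrite -eq_porbit_mem => /eqP <-.
have -> : s y = (s ^+ 1)%g y by rewrite expg1.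
exact: mem_porbit.
Qed.

Lemma porbit_stepV y : s y \in porbit s x -> y \in porbit s x.
Proof.
rewrite -eq_porbit_mem => /eqP <-.
have -> : s y = (s ^+ 1)%g y by rewrite expg1.
rewrite porbit_perm.
exact: porbit_id.
Qed.

Definition rf (y : T) := if y \in porbit s x then s y else y.

Lemma rf_inj : injective rf.
Proof.
move=> y1 y2; rewrite /rf; case: ifP => H1; case: ifP => H2.
- exact: perm_inj.
- by move=> E; move: (porbit_step H1); rewrite E H2.
- by move=> E; move: (porbit_step H2); rewrite -E H1.
- by [].
Qed.

Definition rperm := perm rf_inj.

Lemma rperm_comm : commute rperm s.
Proof.
apply/permP => y; rewrite !permM !permE /rf.
case: ifP => H; first by rewrite porbit_step.
case: ifP => // H'; by move: (porbit_stepV H'); rewrite H.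
Qed.

Lemma rpermE y : rperm y = if y \in porbit s x then s y else y.
Proof. by rewrite permE. Qed.
End Restr.


Section S.
Variables p w e : nat.
Hypothesis pP : prime p.
Local Notation n := (p * w + e).
Let p_gt0 : 0 < p := prime_gt0 pP.
Let p_gt1 : 1 < p := prime_gt1 pP.

Definition bl (x : 'I_n) : nat := x %/ p.

Lemma bl_lt (x : 'I_n) : x < p * w -> bl x < w.
Proof. by move=> H; rewrite /bl ltn_divLR // [w * p]mulnC. Qed.

Lemma bl_ge (x : 'I_n) : p * w <= x -> w <= bl x.
Proof. by move=> H; rewrite /bl leq_divRL // [w * p]mulnC. Qed.

Lemma pt_proof (j : 'I_w) (a : 'I_p) : p * j + a < n.
Proof.
have := ltn_ord j; have := ltn_ord a => Ha Hj.
have : p * j.+1 <= p * w by rewrite leq_mul2l Hj orbT.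
rewrite mulnS; lia.
Qed.

Definition pt (j : 'I_w) (a : 'I_p) : 'I_n := Ordinal (pt_proof j a).

Lemma bl_pt j a : bl (pt j a) = j.
Proof. by rewrite /bl /= mulnC divnMDl // divn_small ?addn0. Qed.

Lemma mod_pt j a : (pt j a) %% p = a.
Proof. by rewrite /= mulnC modnMDl modn_small. Qed.

Lemma pt_lt j a : pt j a < p * w.
Proof.
have := ltn_ord j; have := ltn_ord a => Ha Hj /=.
have : p * j.+1 <= p * w by rewrite leq_mul2l Hj orbT.
rewrite mulnS; lia.
Qed.

Lemma ptE (x : 'I_n) (H : x < p * w) : x = pt (Ordinal (bl_lt H)) (Ordinal (ltn_pmod x p_gt0)).
Proof. by apply: val_inj => /=; rewrite /bl [p * (_ %/ _)]mulnC -divn_eq. Qed.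

Lemma blk_mem (j : 'I_w) (x : 'I_n) : (x \in blk p w e j) = (bl x == j).
Proof. by rewrite inE. Qed.

Definition WR (g : {perm 'I_n}) :=
  [forall x : 'I_n, (p * w <= x) ==> (g x == x)] &&
  [forall x : 'I_n, forall y : 'I_n, (bl (g x) == bl (g y)) == (bl x == bl y)].

Lemma WR_tail (g : {perm 'I_n}) (x : 'I_n) : WR g -> p * w <= x -> g x = x.
Proof. by case/andP=> /forallP /(_ x) /implyP H _ /H /eqP. Qed.

Lemma WR_bl (g : {perm 'I_n}) (x y : 'I_n) : WR g -> (bl (g x) == bl (g y)) = (bl x == bl y).
Proof. by case/andP=> _ /forallP /(_ x) /forallP /(_ y) /eqP. Qed.

Lemma tail_bl (x y : 'I_n) : x < p * w -> p * w <= y -> (bl x == bl y) = false.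
Proof.
move=> Hx Hy; have := bl_lt Hx; have := bl_ge Hy; lia.
Qed.

Lemma WR_nontail (g : {perm 'I_n}) (x : 'I_n) : WR g -> x < p * w -> g x < p * w.
Proof.
move=> Hg Hx; rewrite ltnNge; apply/negP => Hgx.
have := WR_tail Hg Hgx => /perm_inj Hxx.
by move: Hx; rewrite -Hxx ltnNge Hgx.
Qed.

Lemma WR_nontailE (g : {perm 'I_n}) (x : 'I_n) : WR g -> (g x < p * w) = (x < p * w).
Proof.
move=> Hg; apply/idP/idP; last exact: WR_nontail.
apply: contraTT; rewrite -!leqNgt => H; by rewrite WR_tail.
Qed.


Definition a0 : 'I_p := Ordinal p_gt0.

Lemma blk_img_WR (g : {perm 'I_n}) (i : 'I_w) (Hg : WR g) :
  g @: blk p w e i = blk p w e (Ordinal (bl_lt (WR_nontail Hg (pt_lt i a0)))).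
Proof.
apply/setP => y; rewrite blk_mem /=; apply/imsetP/idP.
- case=> x; rewrite blk_mem => /eqP Hx ->.
  by rewrite WR_bl // bl_pt Hx.
- move=> Hy; exists ((g^-1)%g y); last by rewrite permKV.
  by rewrite blk_mem -(bl_pt i a0) -(WR_bl _ _ Hg) permKV.
Qed.

Lemma wrE (g : {perm 'I_n}) : (g \in wr p w e) = WR g.
Proof.
rewrite inE; apply/andP/idP.
- case=> Ht /eqP Hf.
  have C : forall (x : 'I_n) (Hx : x < p * w), exists Hgx : g x < p * w,
      g @: blk p w e (Ordinal (bl_lt Hx)) = blk p w e (Ordinal (bl_lt Hgx)).
    move=> x Hx.
    have Hgx : g x < p * w.
      rewrite ltnNge; apply/negP => Hgx.
      have /perm_inj Hxx : g (g x) = g x by move/forallP: Ht => /(_ (g x)) /implyP /(_ Hgx) /eqP.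
      by move: Hx; rewrite -Hxx ltnNge Hgx.
    exists Hgx.
    have : g @: blk p w e (Ordinal (bl_lt Hx)) \in [set (g @: B) | B : {set 'I_n} in blk_family p w e].
      by apply: imset_f; apply: imset_f.
    rewrite Hf => /imsetP [j _ Hj]; rewrite Hj; congr blk; apply: val_inj => /=.
    have : g x \in g @: blk p w e (Ordinal (bl_lt Hx)) by apply: imset_f; rewrite blk_mem.
    by rewrite Hj blk_mem => /eqP.
  have Htl : forall x : 'I_n, p * w <= x -> g x = x.
    by move=> x Hx; move/forallP: Ht => /(_ x) /implyP /(_ Hx) /eqP.
  apply/andP; split => //; apply/forallP => x; apply/forallP => y; apply/eqP.
  case: (ltnP x (p * w)) => Hx; case: (ltnP y (p * w)) => Hy.
  + have [Hgx Ex] := C x Hx; have [Hgy Ey] := C y Hy.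
    apply/eqP/eqP => H.
    * have : blk p w e (Ordinal (bl_lt Hx)) = blk p w e (Ordinal (bl_lt Hy)).
        apply: (imset_inj (@perm_inj _ g)); rewrite Ex Ey; congr blk; exact: val_inj.
      move/setP => /(_ x); rewrite !blk_mem /= eqxx => /esym /eqP //.
    * have : g y \in blk p w e (Ordinal (bl_lt Hgx)).
        rewrite -Ex; apply: imset_f; rewrite blk_mem /=; exact/eqP.
      by rewrite blk_mem /= => /eqP.
  + have [Hgx _] := C x Hx; by rewrite (Htl y Hy) (tail_bl Hx Hy) (tail_bl Hgx Hy).
  + have [Hgy _] := C y Hy; by rewrite (Htl x Hx) !(eq_sym (bl x)) (tail_bl Hy Hx) (tail_bl Hgy Hx).
  + by rewrite (Htl x Hx) (Htl y Hy).
- move=> Hg; split; first by case/andP: Hg.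
  rewrite eqEcard (card_imset _ (imset_inj (@perm_inj _ g))) leqnn andbT.
  apply/subsetP => B /imsetP [B' /imsetP [i _ ->] ->].
  by rewrite blk_img_WR //; apply: imset_f.
Qed.


Lemma WR1 : WR 1.
Proof.
apply/andP; split; apply/forallP => x; first by rewrite perm1 eqxx implybT.
by apply/forallP => y; rewrite !perm1.
Qed.

Lemma WRM (g h : {perm 'I_n}) : WR g -> WR h -> WR (g * h)%g.
Proof.
move=> Hg Hh; apply/andP; split; apply/forallP => x.
  by apply/implyP => Hx; rewrite permM (WR_tail Hg Hx) (WR_tail Hh Hx).
by apply/forallP => y; rewrite !permM (WR_bl _ _ Hh) (WR_bl _ _ Hg).
Qed.

Lemma wr_group_set : group_set (wr p w e).
Proof. by apply/group_setP; split => [|x y]; rewrite !wrE; [exact: WR1| exact: WRM]. Qed.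

Canonical wr_group := group wr_group_set.

Lemma WRV (g : {perm 'I_n}) : WR g -> WR (g^-1)%g.
Proof. by rewrite -!wrE; exact: groupVr. Qed.

Lemma WRX (g : {perm 'I_n}) k : WR g -> WR (g ^+ k)%g.
Proof. by rewrite -!wrE; exact: groupX. Qed.

Lemma WRJ (g k : {perm 'I_n}) : WR g -> WR k -> WR (g ^ k)%g.
Proof. by rewrite -!wrE; exact: groupJ. Qed.

Definition PC (c : {perm 'I_n}) :=
  (forall x : 'I_n, x < p * w -> c x < p * w) /\
  (forall x y : 'I_n, x < p * w -> y < p * w -> (bl (c x) == bl (c y)) = (bl x == bl y)).

Lemma symE_fix (b : {perm 'I_n}) (x : 'I_n) : b \in symE p w e -> x < p * w -> b x = x.
Proof. by rewrite inE => /forallP /(_ x) /implyP H /H /eqP. Qed.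

Lemma mulE (c : {perm 'I_n}) : (c \in (wr p w e * symE p w e)%g) <-> PC c.
Proof.
split.
- case/mulsgP => a b; rewrite wrE => Ha Hb ->.
  split => [x Hx|x y Hx Hy]; rewrite ?permM ?(symE_fix Hb) ?WR_nontail //.
  exact: WR_bl.
- case=> H1 H2.
  pose f (x : 'I_n) := if x < p * w then c x else x.
  have finj : injective f.
    move=> x y; rewrite /f; case: ifP => Hx; case: ifP => Hy.
    + exact: perm_inj.
    + by move=> E; move: (H1 x Hx); rewrite E ltnNge; case/negP; rewrite leqNgt Hy.
    + by move=> E; move: (H1 y Hy); rewrite -E ltnNge; case/negP; rewrite leqNgt Hx.
    + by [].
  pose a := perm finj.
  have Ha : WR a.
    apply/andP; split; apply/forallP => x.
      by apply/implyP => Hx; rewrite permE /f ltnNge Hx.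
    apply/forallP => y; rewrite !permE /f.
    case: (ltnP x (p * w)) => Hx; case: (ltnP y (p * w)) => Hy.
    + by rewrite H2.
    + by rewrite (tail_bl Hx Hy) (tail_bl (H1 x Hx) Hy).
    + by rewrite !(eq_sym (bl x)) (tail_bl Hy Hx) (tail_bl (H1 y Hy) Hx).
    + by [].
  have -> : c = (a * (a^-1 * c))%g by rewrite mulKVg.
  apply: mem_mulg; first by rewrite wrE.
  rewrite inE; apply/forallP => x; apply/implyP => Hx; rewrite permM.
  have : a ((a^-1)%g x) = x by rewrite permKV.
  rewrite permE /f; case: ifP => Hy.
  + by move=> ->.
  + by move=> E; move: Hx; rewrite -E Hy.
Qed.


Lemma calWE (g : {perm 'I_n}) :
  g \in calW p w e <-> WR g /\ (forall c, c \in ('C[g.`_p])%g -> PC c).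
Proof.
rewrite inE -wrE; split.
- by case/andP=> Hg /subsetP H; split => // c /H /mulE.
- by case=> Hg H; rewrite Hg; apply/subsetP => c /H /mulE.
Qed.

Lemma PC_conj (c k : {perm 'I_n}) : WR k -> PC c -> PC (c ^ k)%g.
Proof.
move=> Hk [H1 H2]; have Hk' := WRV Hk.
have E : forall x, (c ^ k)%g x = k (c ((k^-1)%g x)) by move=> x; rewrite conjgE !permM.
split => [x Hx|x y Hx Hy]; rewrite !E.
  by apply: WR_nontail => //; apply: H1; apply: WR_nontail.
by rewrite (WR_bl _ _ Hk) H2 ?WR_nontail // (WR_bl _ _ Hk').
Qed.

Lemma calW_conj1 (h k : {perm 'I_n}) : WR k -> h \in calW p w e -> (h ^ k)%g \in calW p w e.
Proof.
move=> Hk /calWE [Hh HC]; apply/calWE; split; first exact: WRJ.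
move=> c; rewrite consttJ cent1J mem_conjg => /HC /(PC_conj Hk).
by rewrite conjgKV.
Qed.

Lemma calW_conj (h k : {perm 'I_n}) : WR k -> ((h ^ k)%g \in calW p w e) = (h \in calW p w e).
Proof.
move=> Hk; apply/idP/idP; last exact: calW_conj1.
by move/(calW_conj1 (WRV Hk)); rewrite conjgK.
Qed.


Lemma card_blk (j : 'I_w) : #|blk p w e j| = p.
Proof.
have -> : blk p w e j = [set pt j a | a : 'I_p].
  apply/setP => x; rewrite blk_mem; apply/eqP/imsetP.
  - move=> Hx.
    have Hxl : x < p * w by have := ltn_ord j; rewrite -Hx /bl ltn_divLR // => H; lia.
    exists (Ordinal (ltn_pmod x p_gt0)) => //; rewrite {1}(ptE Hxl); congr pt; exact: val_inj.
  - by case=> a _ ->; rewrite bl_pt.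
rewrite card_imset ?card_ord //.
by move=> a b /(congr1 (fun x : 'I_n => x %% p)); rewrite !mod_pt => /val_inj.
Qed.

Definition good (g : {perm 'I_n}) (j : 'I_w) := blk p w e j \subset porbit g (pt j a0).

Section G.
Variable g : {perm 'I_n}.
Hypothesis Hg : WR g.

Definition sgf (j : 'I_w) : 'I_w := Ordinal (bl_lt (WR_nontail Hg (pt_lt j a0))).

Lemma sgf_inj : injective sgf.
Proof.
move=> j j' /(congr1 val) /= /eqP; rewrite (WR_bl _ _ Hg) !bl_pt => /eqP.
exact: val_inj.
Qed.

Definition sgb := perm sgf_inj.

Lemma bl_g (y : 'I_n) (j : 'I_w) : bl y = j -> bl (g y) = sgb j.
Proof.
move=> Hy; rewrite permE /=; apply/eqP; rewrite (WR_bl _ _ Hg) bl_pt Hy //.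
Qed.

Lemma blX (x : 'I_n) (j : 'I_w) k : bl x = j -> bl ((g ^+ k)%g x) = (sgb ^+ k)%g j.
Proof.
move=> Hx; elim: k => [|k IH]; first by rewrite !expg0 !perm1.
by rewrite !expgSr !permM; apply: bl_g.
Qed.


Lemma bl_nontail (x : 'I_n) : bl x < w -> x < p * w.
Proof. by rewrite /bl ltn_divLR // => H; lia. Qed.

Local Notation L x := #|porbit g x|.
Local Notation m j := #|porbit sgb j|.

Lemma blX_eq (x : 'I_n) (j : 'I_w) k : bl x = j -> (bl ((g ^+ k)%g x) == j) = (m j %| k).
Proof. by move=> Hx; rewrite (blX _ Hx) -orb_fix. Qed.

Lemma m_dvd_L (x : 'I_n) (j : 'I_w) : bl x = j -> m j %| L x.
Proof.
move=> Hx; rewrite -(blX_eq _ Hx).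
have /eqP -> : ((g ^+ #|porbit g x|)%g x == x) by rewrite orb_fix.
by rewrite Hx.
Qed.

Lemma orbm (x : 'I_n) (j : 'I_w) : bl x = j ->
  porbit (g ^+ m j)%g x = porbit g x :&: blk p w e j.
Proof.
move=> Hx; apply/setP => y; rewrite inE blk_mem; apply/idP/andP.
- case/porbitP => t ->; rewrite -expgM mem_porbit; split => //.
  by rewrite blX_eq // dvdn_mulr.
- case=> /porbitP [k ->]; rewrite blX_eq // => /dvdnP [q ->].
  by rewrite [q * _]mulnC expgM mem_porbit.
Qed.

Lemma card_Oblk (x : 'I_n) (j : 'I_w) : bl x = j ->
  #|porbit g x :&: blk p w e j| = L x %/ m j.
Proof.
by move=> Hx; rewrite -orbm // card_orbX; congr (_ %/ _); apply/gcdn_idPl; exact: m_dvd_L.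
Qed.

Lemma m_gt0 (j : 'I_w) : 0 < m j.
Proof. exact: orb_gt0. Qed.

Lemma good_iffL (x : 'I_n) (j : 'I_w) : bl x = j ->
  (blk p w e j \subset porbit g x) = (L x == m j * p).
Proof.
move=> Hx; have Hd := m_dvd_L Hx.
apply/idP/eqP.
- move=> Hs; have : #|porbit g x :&: blk p w e j| = p.
    by rewrite setIC (setIidPl Hs) card_blk.
  rewrite card_Oblk // => H; have E := divnK Hd; by rewrite -E H (mulnC p).
- move=> HL; have Hc : #|porbit g x :&: blk p w e j| = #|blk p w e j|.
    by rewrite card_Oblk // HL card_blk mulKn // m_gt0.
  have := subsetIr (porbit g x) (blk p w e j).
  move/subset_leqif_cards => [_]; rewrite Hc eqxx => /esym H.
  move/eqP: H => <-; exact: subsetIl.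
Qed.

Lemma goodE (x : 'I_n) (j : 'I_w) : bl x = j -> good g j = (blk p w e j \subset porbit g x).
Proof.
move=> Hx; rewrite /good; apply/idP/idP => H.
- have : x \in porbit g (pt j a0) by apply: (subsetP H); rewrite blk_mem Hx.
  by rewrite -eq_porbit_mem => /eqP ->.
- have : pt j a0 \in porbit g x by apply: (subsetP H); rewrite blk_mem bl_pt.
  by rewrite -eq_porbit_mem => /eqP ->.
Qed.


Local Notation N := (#[g]%g).
Definition u := chinese (N`_p) (N`_p^') 1 0.
Local Notation z := ((g.`_p)%g).

Lemma zE : z = (g ^+ u)%g.
Proof. by []. Qed.

Lemma zX k : (z ^+ k)%g = (g ^+ (u * k))%g.
Proof. by rewrite zE expgM. Qed.

Lemma N_gt0 : 0 < N.
Proof. exact: fingroup.order_gt0. Qed.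

Lemma u_dvd : N`_p^' %| u.
Proof.
have := chinese_modr (coprime_partC p N N) 1 0.
by rewrite /dvdn mod0n /u => ->.
Qed.

Lemma u_cop : coprime u N`_p.
Proof.
have := chinese_modl (coprime_partC p N N) 1 0.
rewrite /coprime -gcdn_modl /u => ->; by rewrite gcdn_modl gcd1n.
Qed.

Lemma L_dvd_N (x : 'I_n) : L x %| N.
Proof. by rewrite -orb_fix expg_order perm1. Qed.

Lemma Lp'_dvd_u (x : 'I_n) : (L x)`_p^' %| u.
Proof. exact: dvdn_trans (partn_dvd _ N_gt0 (L_dvd_N x)) u_dvd. Qed.

Lemma Lp_cop (x : 'I_n) : coprime u (L x)`_p.
Proof. exact: coprime_dvdr (partn_dvd _ N_gt0 (L_dvd_N x)) u_cop. Qed.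

Lemma zorb_card (x : 'I_n) : #|porbit z x| = (L x)`_p.
Proof.
rewrite zE card_orbX.
have HL := orb_gt0 g x.
have E : gcdn u (L x) = (L x)`_p^'.
  rewrite -{1}(partnC p HL) (mulnC ((L x)`_p)) Gauss_gcdl; last exact: Lp_cop.
  by apply/gcdn_idPr; exact: Lp'_dvd_u.
by rewrite E -{1}(partnC p HL) mulnK // part_gt0.
Qed.

Lemma good_z (x : 'I_n) (j : 'I_w) : bl x = j -> good g j ->
  porbit (z ^+ (#|porbit z x| %/ p))%g x = blk p w e j.
Proof.
move=> Hx Hgd; have Hs : blk p w e j \subset porbit g x by rewrite -(goodE Hx).
have /eqP HL : L x == m j * p by rewrite -good_iffL.
have Hm := m_gt0 j.
have Lp : (L x)`_p = (m j)`_p * p by rewrite HL partnM // (part_pnat_id (pnat_id pP)).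
have Hq : (L x)`_p %/ p = (m j)`_p by rewrite Lp mulnK.
have E2 : porbit (g ^+ m j)%g x = blk p w e j by rewrite orbm // (setIidPr Hs).
rewrite -E2; apply/eqP; rewrite eqEcard; apply/andP; split.
- apply/subsetP => y /porbitP [t ->]; rewrite zorb_card Hq -expgM zX.
  have Hd1 : m j %| u * (m j)`_p.
    rewrite -{1}(partnC p Hm) (mulnC ((m j)`_p)).
    apply: dvdn_mul; last exact: dvdnn.
    apply: dvdn_trans (Lp'_dvd_u x).
    by apply: partn_dvd; [exact: orb_gt0 | exact: m_dvd_L Hx].
  have Hd : m j %| u * ((m j)`_p * t) by rewrite mulnA dvdn_mulr.
  by case/dvdnP: Hd => q ->; rewrite [q * _]mulnC expgM mem_porbit.
- rewrite E2 card_blk (card_orbX z) zorb_card Hq Lp.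
  by rewrite (gcdn_idPl (dvdn_mulr _ (dvdnn _))) mulKn ?part_gt0.
Qed.

Lemma bad_z (x : 'I_n) (j : 'I_w) k : bl x = j -> ~~ good g j ->
  (z ^+ k)%g x \in blk p w e j -> (z ^+ k)%g x = x.
Proof.
move=> Hx Hbad; rewrite zX blk_mem blX_eq // => Hmk.
have Hm := m_gt0 j; have HL := orb_gt0 g x.
have Hd := m_dvd_L Hx.
set r := L x %/ m j.
have Er : L x = r * m j by rewrite divnK.
have Hr0 : 0 < r by rewrite divn_gt0 // dvdn_leq.
have Hrp : r < p.
  have : r <= p.
    rewrite /r -card_Oblk //.
    by have := subset_leq_card (subsetIr (porbit g x) (blk p w e j)); rewrite card_blk.
  rewrite leq_eqVlt => /orP [/eqP Hrp|//].
  by move: Hbad; rewrite (goodE Hx) good_iffL // Er Hrp mulnC eqxx.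
have r1 : r`_p = 1.
  apply: part_p'nat; rewrite p'natE //; apply/negP => /(dvdn_leq Hr0); lia.
have Lp : (L x)`_p = (m j)`_p by rewrite Er partnM // r1 mul1n.
have H1 : (L x)`_p %| k.
  rewrite Lp -(@Gauss_dvdr _ u); last first.
    rewrite coprime_sym; apply: coprime_dvdr (Lp_cop x).
    by rewrite Lp.
  exact: dvdn_trans (dvdn_part _ _) Hmk.
apply/eqP; rewrite orb_fix -(partnC p HL) mulnC.
exact: dvdn_mul (Lp'_dvd_u x) H1.
Qed.

Lemma good_moved (x : 'I_n) (j : 'I_w) : bl x = j -> good g j -> z x != x.
Proof.
move=> Hx Hgd; apply/negP => /eqP Hz.
have H1 : #|porbit z x| = 1.
  by apply/eqP; rewrite -dvdn1 -orb_fix expg1 Hz.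
have := good_z Hx Hgd; rewrite H1 divn_small // expg0 => E.
have : #|porbit 1%g x| = 1.
  by apply/eqP; rewrite -dvdn1 -orb_fix expg1 perm1.
rewrite E card_blk => Hp; move: p_gt1; rewrite Hp.
by [].
Qed.

Lemma good_inv (x : 'I_n) (j j' : 'I_w) k : bl x = j -> bl ((g ^+ k)%g x) = j' ->
  good g j' = good g j.
Proof.
move=> Hx Hy.
have Ej : j' = (sgb ^+ k)%g j by apply: val_inj; rewrite /= -Hy (blX _ Hx).
rewrite (goodE Hy) (goodE Hx) !good_iffL // porbit_perm Ej porbit_perm //.
Qed.


Definition nb := #|[set j : 'I_w | ~~ good g j]|.
Definition cond := nb + (0 < e) <= 1.

Definition a1 : 'I_p := Ordinal p_gt1.

Lemma pt_inj j a b : pt j a = pt j b -> a = b.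
Proof. by move/(congr1 (fun x : 'I_n => x %% p)); rewrite !mod_pt => /val_inj. Qed.

Lemma pt_neq j j' a b : j != j' -> pt j a != pt j' b.
Proof. by apply: contra => /eqP /(congr1 bl); rewrite !bl_pt => /val_inj ->. Qed.

Lemma z_WR : WR z.
Proof. by rewrite zE; apply: WRX. Qed.

Lemma comm_X (c : {perm 'I_n}) k y : commute c z -> c ((z ^+ k)%g y) = (z ^+ k)%g (c y).
Proof. by move=> /(commuteX k) H; rewrite -permM -H permM. Qed.

Lemma bad_fixed_of_C :
  (forall c, c \in ('C[z])%g -> PC c) ->
  forall (x : 'I_n) (j : 'I_w), bl x = j -> ~~ good g j -> z x = x.
Proof.
move=> HC x j Hx Hb; apply/eqP/negPn/negP => Hz.
pose c := rperm z x.
have Cc : c \in ('C[z])%g by apply/cent1P; exact: rperm_comm.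
have [_ H2] := HC c Cc.
pose y := if x == pt j a0 then pt j a1 else pt j a0.
have Hy : bl y = j by rewrite /y; case: ifP => _; rewrite bl_pt.
have Hyx : y != x.
  rewrite /y; case: ifP => [/eqP ->|/negbT]; last by rewrite eq_sym.
  by apply/negP => /eqP /pt_inj /(congr1 val).
have Hny : y \notin porbit z x.
  apply/negP => /porbitP [k Ek]; move: Hyx; rewrite Ek.
  by rewrite (bad_z Hx Hb) ?eqxx // -Ek blk_mem Hy.
have Hxn : x < p * w by apply: bl_nontail; rewrite Hx.
have Hyn : y < p * w by apply: bl_nontail; rewrite Hy.
have := H2 x y Hxn Hyn.
rewrite !rpermE porbit_id (negbTE Hny) Hx Hy eqxx.
have Hzx : bl (z x) != j.
  apply/negP => /eqP E; move: Hz; rewrite -(expg1 z) (bad_z Hx Hb) ?eqxx //.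
  by rewrite blk_mem expg1 E.
by rewrite (negbTE Hzx).
Qed.

Lemma nec : (forall c, c \in ('C[z])%g -> PC c) -> cond.
Proof.
move=> HC; have Hfix := bad_fixed_of_C HC.
rewrite /cond.
case: (posnP e) => He.
- rewrite addn0; apply/card_le1P => j1; rewrite inE => Hb1 j2.
  rewrite inE; apply/idP/eqP; last by move->.
  move=> Hb2; apply/eqP; apply/negP => Hne.
  pose x1 := pt j1 a0; pose x2 := pt j2 a0; pose y1 := pt j1 a1.
  have z1 : z x1 = x1 by apply: (Hfix _ j1) => //; rewrite bl_pt.
  have z2 : z x2 = x2 by apply: (Hfix _ j2) => //; rewrite bl_pt.
  pose c := tperm x1 x2.
  have Cc : c \in ('C[z])%g.
    apply/cent1P; apply/permP => y; rewrite !permM.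
    case: (tpermP x1 x2 y) => [->|->|/eqP Hy1 /eqP Hy2].
    + by rewrite z1 tpermL z2.
    + by rewrite z2 tpermR z1.
    + rewrite tpermD //.
      * by apply: contra Hy1 => /eqP E; rewrite -z1 in E; rewrite (perm_inj E).
      * by apply: contra Hy2 => /eqP E; rewrite -z2 in E; rewrite (perm_inj E).
  have [_ H2] := HC c Cc.
  have := H2 x1 y1 (pt_lt _ _) (pt_lt _ _).
  have n1 : x1 != y1 by apply/negP => /eqP /pt_inj /(congr1 val).
  have n2 : x2 != y1.
    rewrite /x2 /y1 eq_sym; apply: pt_neq; apply/eqP => E; apply: Hne; by rewrite E.
  rewrite /c tpermL (tpermD n1 n2) !bl_pt eqxx => /eqP /val_inj E; move: Hne; rewrite E eqxx.
  by [].
- change (nb + 1 <= 1); rewrite addn1 ltnS leqn0 cards_eq0.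
  apply/eqP/setP => j; rewrite !inE; apply/negP => Hb.
  pose x := pt j a0.
  have Ht : p * w < n by rewrite -[X in X < _]addn0 ltn_add2l.
  pose t : 'I_n := Ordinal Ht.
  have zx : z x = x.
    by apply: (Hfix _ j); [rewrite /x bl_pt | apply/negP].
  have zt : z t = t by apply: WR_tail z_WR _; rewrite /= leqnn.
  pose c := tperm x t.
  have Cc : c \in ('C[z])%g.
    apply/cent1P; apply/permP => y; rewrite !permM.
    case: (tpermP x t y) => [->|->|/eqP Hy1 /eqP Hy2].
    + by rewrite zx tpermL zt.
    + by rewrite zt tpermR zx.
    + rewrite tpermD //.
      * by apply: contra Hy1 => /eqP E; rewrite -zx in E; rewrite (perm_inj E).
      * by apply: contra Hy2 => /eqP E; rewrite -zt in E; rewrite (perm_inj E).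
  have [H1 _] := HC c Cc.
  by move: (H1 x (pt_lt _ _)); rewrite /c tpermL /= ltnn.
Qed.


Lemma two_bad (j1 j2 : 'I_w) : j1 != j2 -> ~~ good g j1 -> ~~ good g j2 -> ~~ cond.
Proof.
move=> Hne H1 H2; rewrite /cond -ltnNge.
have : 2 <= nb.
  have := cards2 j1 j2; rewrite Hne => <-; apply: subset_leq_card.
  by apply/subsetP => j; rewrite !inE => /orP [] /eqP ->.
by move=> H; apply: leq_trans H (leq_addr _ _).
Qed.

Lemma cond_e0 (j : 'I_w) : cond -> ~~ good g j -> e = 0.
Proof.
move=> Hc Hb.
have H1 : 0 < nb by rewrite /nb card_gt0; apply/set0Pn; exists j; rewrite inE.
apply/eqP; rewrite -leqn0 leqNgt; apply/negP => He; move: Hc.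
by rewrite /cond He /= addn1 ltnS leqNgt H1.
Qed.

Lemma bad_fixed (x : 'I_n) (j : 'I_w) : cond -> bl x = j -> ~~ good g j -> z x = x.
Proof.
move=> Hc Hx Hb; apply/eqP/negPn/negP => Hz.
have Hxn : x < p * w by apply: bl_nontail; rewrite Hx.
have Hyn : z x < p * w by apply: WR_nontail z_WR Hxn.
pose j' := Ordinal (bl_lt Hyn).
have Hne : j' != j.
  apply/negP => /eqP E; move: Hz; rewrite -(expg1 z) (bad_z Hx Hb) ?eqxx //.
  by rewrite blk_mem expg1 -E.
have Hb' : ~~ good g j'.
  by rewrite (@good_inv x j j' u Hx) // -zE.
by move: Hc; apply/negP; apply: two_bad Hne Hb' Hb.
Qed.

Lemma porbit_c (c : {perm 'I_n}) (x : 'I_n) : commute c z -> porbit z (c x) = c @: porbit z x.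
Proof.
move=> Hc; apply/setP => y; apply/porbitP/imsetP.
- by case=> k ->; exists ((z ^+ k)%g x); rewrite ?mem_porbit // comm_X.
- by case=> y' /porbitP [k ->] ->; exists k; rewrite comm_X.
Qed.

Lemma suff_C : cond -> forall c, c \in ('C[z])%g -> PC c.
Proof.
move=> Hc.
have P1 : forall c, c \in ('C[z])%g -> forall x : 'I_n, x < p * w -> c x < p * w.
  move=> c /cent1P Cc x Hx.
  pose j := Ordinal (bl_lt Hx).
  case: (boolP (good g j)) => Hgd.
  + have Hm := good_moved (erefl (bl x) : bl x = j) Hgd.
    rewrite ltnNge; apply/negP => Ht.
    move: Hm; rewrite -(expg1 z) -(inj_eq (@perm_inj _ c)) comm_X // expg1.
    by rewrite (WR_tail z_WR Ht) eqxx.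
  + have He := cond_e0 Hc Hgd; have := ltn_ord (c x); lia.
have Imp : forall c, c \in ('C[z])%g -> forall x y : 'I_n, x < p * w -> y < p * w ->
    bl x = bl y -> bl (c x) = bl (c y).
  move=> c Cc' x y Hx Hy Exy; have Cc := cent1P Cc'.
  pose j := Ordinal (bl_lt Hx).
  have Hxj : bl x = j by [].
  have Hyj : bl y = j by rewrite -Exy.
  have Hcx := P1 c Cc' x Hx; have Hcy := P1 c Cc' y Hy.
  pose jx := Ordinal (bl_lt Hcx); pose jy := Ordinal (bl_lt Hcy).
  case: (boolP (good g j)) => Hgd.
  + have Hzx := good_moved Hxj Hgd.
    have Hgx : good g jx.
      apply/negPn/negP => Hb; move: Hzx.
      rewrite -(inj_eq (@perm_inj _ c)) -(expg1 z) comm_X // expg1.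
      by rewrite (bad_fixed Hc (erefl _ : bl (c x) = jx) Hb) eqxx.
    have := good_z Hxj Hgd => E1.
    have := good_z (erefl _ : bl (c x) = jx) Hgx => E2.
    have : y \in porbit (z ^+ (#|porbit z x| %/ p))%g x by rewrite E1 blk_mem Hyj.
    case/porbitP => t Et.
    have : c y \in blk p w e jx.
      rewrite -E2 porbit_c // card_imset; last exact: perm_inj.
      by rewrite Et -expgM comm_X // expgM mem_porbit.
    by rewrite blk_mem => /eqP ->.
  + have fx := bad_fixed Hc Hxj Hgd; have fy := bad_fixed Hc Hyj Hgd.
    have fcx : z (c x) = c x by rewrite -(expg1 z) -comm_X // expg1 fx.
    have fcy : z (c y) = c y by rewrite -(expg1 z) -comm_X // expg1 fy.
    have Bx : ~~ good g jx.
      by apply/negP => Hgx; have := good_moved (erefl _ : bl (c x) = jx) Hgx; rewrite fcx eqxx.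
    have By : ~~ good g jy.
      by apply/negP => Hgy; have := good_moved (erefl _ : bl (c y) = jy) Hgy; rewrite fcy eqxx.
    case: (eqVneq jx jy) => [/(congr1 val) //|Hne].
    by case/negP: (two_bad Hne Bx By).
move=> c Cc; split; first exact: P1.
move=> x y Hx Hy; apply/eqP/eqP; last exact: Imp.
move=> E; have CcV : (c^-1)%g \in ('C[z])%g by rewrite groupV.
have := Imp _ CcV (c x) (c y) (P1 _ Cc _ Hx) (P1 _ Cc _ Hy) E.
by rewrite !permK.
Qed.

Lemma key : (g \in calW p w e) = cond.
Proof.
apply/idP/idP.
- by case/calWE => _; exact: nec.
- by move=> Hc; apply/calWE; split => //; exact: suff_C.
Qed.

End G.

Lemma wr_elt_pt (g : {perm 'I_n}) xs sgx (i : 'I_w) (a : 'I_p) :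
  wr_elt p w e g xs sgx -> g (pt i a) = pt (sgx i) (xs (sgx i) a).
Proof.
case/andP=> _ /forallP /(_ i) /forallP /(_ a) /forallP /(_ (pt i a)).
by rewrite eqxx /= => /eqP H; apply: val_inj.
Qed.

Lemma wr_elt_sg (g : {perm 'I_n}) (Hg : WR g) xs sgx :
  wr_elt p w e g xs sgx -> sgx = sgb Hg.
Proof.
move=> H; apply/permP => i; apply: val_inj.
by rewrite permE /= (wr_elt_pt _ _ H) bl_pt.
Qed.

Lemma val_nontail (x : 'I_n) (j : 'I_w) : bl x = j -> val x = p * j + x %% p.
Proof. by move=> <-; rewrite /bl [p * (_ %/ _)]mulnC -divn_eq. Qed.

Section WE.
Variable g : {perm 'I_n}.
Hypothesis Hg : WR g.

Definition xsf (j : 'I_w) (a : 'I_p) : 'I_p :=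
  Ordinal (ltn_pmod (g (pt ((sgb Hg)^-1 j)%g a)) p_gt0).

Lemma xsf_inj j : injective (xsf j).
Proof.
move=> a b /(congr1 val) /= E.
have Ha : bl (g (pt ((sgb Hg)^-1 j)%g a)) = j.
  by rewrite (bl_g Hg (bl_pt _ _)) permKV.
have Hb : bl (g (pt ((sgb Hg)^-1 j)%g b)) = j.
  by rewrite (bl_g Hg (bl_pt _ _)) permKV.
have : g (pt ((sgb Hg)^-1 j)%g a) = g (pt ((sgb Hg)^-1 j)%g b).
  by apply: val_inj; rewrite (val_nontail Ha) (val_nontail Hb) E.
by move/perm_inj/pt_inj.
Qed.

Definition xsp : {ffun 'I_w -> {perm 'I_p}} := [ffun j => perm (@xsf_inj j)].

Lemma xspE (i : 'I_w) (a : 'I_p) : g (pt i a) = pt (sgb Hg i) (xsp (sgb Hg i) a).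
Proof.
apply: val_inj; rewrite ffunE [X in _ = _ + val X]permE /= permK.
exact: (val_nontail (bl_g Hg (bl_pt i a))).
Qed.

Lemma wr_elt_xsp : wr_elt p w e g xsp (sgb Hg).
Proof.
apply/andP; split.
  by apply/forallP => x; apply/implyP => Hx; rewrite (WR_tail Hg Hx).
apply/forallP => i; apply/forallP => a; apply/forallP => x; apply/implyP => /eqP Hx.
have -> : x = pt i a by apply: val_inj.
by rewrite xspE.
Qed.

End WE.

Section NF.
Variable g : {perm 'I_n}.
Hypothesis Hg : WR g.
Variable xs : {ffun 'I_w -> {perm 'I_p}}.
Local Notation S := (sgb Hg).
Hypothesis Hw : wr_elt p w e g xs S.
Hypothesis Htr : forall i : 'I_w, ~~ orbit_min w S i -> xs i = 1%g.

Lemma min_le i j : orbit_min w S i -> j \in porbit S i -> i <= j.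
Proof. by move=> /forallP /(_ j) /implyP. Qed.

Lemma min_uniq i j : orbit_min w S i -> orbit_min w S j -> j \in porbit S i -> j = i.
Proof.
move=> Hi Hj Hji; apply: val_inj; apply/eqP; rewrite eqn_leq (min_le Hi Hji) andbT.
by apply: (min_le Hj); rewrite porbit_sym.
Qed.

Lemma iter_small (i : 'I_w) (a : 'I_p) t : orbit_min w S i -> t < #|porbit S i| ->
  (g ^+ t)%g (pt i a) = pt ((S ^+ t)%g i) a.
Proof.
move=> Hi; elim: t => [|t IH] Ht; first by rewrite !expg0 !perm1.
rewrite !expgSr !permM IH ?(ltnW Ht) // (wr_elt_pt _ _ Hw) -permM -expgSr.
rewrite Htr ?perm1 //; apply/negP => Hm.
have := min_uniq Hi Hm (mem_porbit _ _ _) => /eqP.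
rewrite orb_fix => /(dvdn_leq (ltn0Sn _)); rewrite leqNgt Ht.
by [].
Qed.

Lemma iter_m (i : 'I_w) (a : 'I_p) : orbit_min w S i ->
  (g ^+ #|porbit S i|)%g (pt i a) = pt i (xs i a).
Proof.
move=> Hi; have Hm := orb_gt0 S i.
rewrite -(prednK Hm) expgSr permM iter_small ?prednK // (wr_elt_pt _ _ Hw).
rewrite -permM -expgSr prednK //.
by have /eqP -> : ((S ^+ #|porbit S i|)%g i == i) by rewrite orb_fix.
Qed.

Lemma iter_mt (i : 'I_w) t : orbit_min w S i -> forall a : 'I_p,
  (g ^+ (#|porbit S i| * t))%g (pt i a) = pt i ((xs i ^+ t)%g a).
Proof.
move=> Hi; elim: t => [|t IH] a; first by rewrite muln0 !expg0 !perm1.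
by rewrite mulnS expgD permM iter_m // IH expgS permM.
Qed.

Lemma pcycleE (x : {perm 'I_p}) : is_pcycle p x = (#|porbit x a0| == p).
Proof.
apply/existsP/eqP; last by move=> H; exists a0; rewrite H.
case=> a /eqP Ha.
have : porbit x a = [set: 'I_p].
  by apply/eqP; rewrite eqEcard subsetT cardsT card_ord Ha leqnn.
move=> E; have : a0 \in porbit x a by rewrite E inE.
by rewrite -eq_porbit_mem => /eqP ->.
Qed.

Lemma good_min (i : 'I_w) : orbit_min w S i -> good g i = is_pcycle p (xs i).
Proof.
move=> Hi.
have Hx : bl (pt i a0) = i by rewrite bl_pt.
have E : porbit (g ^+ #|porbit S i|)%g (pt i a0) = pt i @: porbit (xs i) a0.
  apply/setP => y; apply/porbitP/imsetP.
  - by case=> t ->; rewrite -expgM iter_mt //; exists ((xs i ^+ t)%g a0) => //; exact: mem_porbit.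
  - by case=> b /porbitP [t ->] ->; exists t; rewrite -expgM iter_mt.
have Hc : #|porbit (g ^+ #|porbit S i|)%g (pt i a0)| = #|porbit (xs i) a0|.
  by rewrite E card_imset //; exact: pt_inj.
rewrite pcycleE -Hc (orbm Hg Hx) (card_Oblk Hg Hx) (goodE g Hx) (good_iffL Hg Hx).
have Hd := m_dvd_L Hg Hx.
rewrite -{1}(divnK Hd) mulnC eqn_pmul2l //; exact: orb_gt0.
Qed.

Definition mn (j : 'I_w) : 'I_w := [arg min_(k < j in porbit S j) (k : nat)].

Lemma mn_spec j : mn j \in porbit S j /\ orbit_min w S (mn j).
Proof.
rewrite /mn; case: arg_minnP; first exact: porbit_id.
move=> k Hk Hmin; split => //; apply/forallP => k'; apply/implyP => Hk'.
have E : porbit S k = porbit S j by apply/eqP; rewrite eq_porbit_mem.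
by apply: Hmin; rewrite -E.
Qed.

Lemma mn_eq (i j : 'I_w) : orbit_min w S i -> (mn j == i) = (j \in porbit S i).
Proof.
move=> Hi; have [H1 H2] := mn_spec j; apply/eqP/idP.
- by move=> E; rewrite porbit_sym -E.
- move=> Hj; apply: (min_uniq Hi H2).
  by move: Hj; rewrite -eq_porbit_mem => /eqP <-.
Qed.

Lemma good_mn (j : 'I_w) : good g j = is_pcycle p (xs (mn j)).
Proof.
have [H1 H2] := mn_spec j; rewrite -good_min //.
move: H1; rewrite porbit_sym => /porbitP [t Et].
have Hy : bl ((g ^+ t)%g (pt (mn j) a0)) = j by rewrite (blX Hg t (bl_pt _ _)) -Et.
exact: (@good_inv _ Hg (pt (mn j) a0) (mn j) j t (bl_pt _ _) Hy).
Qed.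

Lemma count_good :
  \sum_(i : 'I_w | orbit_min w S i && is_pcycle p (xs i)) #|porbit S i| =
  #|[set j : 'I_w | good g j]|.
Proof.
have R : #|[set j : 'I_w | good g j]| =
    \sum_(j : 'I_w) (if is_pcycle p (xs (mn j)) then 1 else 0).
  rewrite -sum1_card big_mkcond /=; apply: eq_bigr => j _; by rewrite inE good_mn.
rewrite R [RHS](partition_big mn (orbit_min w S)) /=; last by move=> j _; have [] := mn_spec j.
rewrite big_mkcondr /=; apply: eq_bigr => i Hi.
rewrite (eq_bigr (fun _ => if is_pcycle p (xs i) then 1 else 0)); last first.
  by move=> j /eqP ->.
rewrite (eq_bigl (fun j => j \in porbit S i)); last by move=> j; rewrite mn_eq.
rewrite sum_nat_const; case: ifP => _; by rewrite ?muln1 ?muln0.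
Qed.

End NF.

Lemma nontail_pt (x : 'I_n) : x < p * w -> exists j a, x = pt j a.
Proof. by move=> Hx; exists (Ordinal (bl_lt Hx)), (Ordinal (ltn_pmod x p_gt0)); exact: ptE. Qed.

Lemma bl_pt_eq (j j' : 'I_w) a b : bl (pt j a) = bl (pt j' b) -> j = j'.
Proof. by rewrite !bl_pt => /val_inj. Qed.

Section NFE.
Variable h : {perm 'I_n}.
Hypothesis Hh : WR h.
Local Notation S := (sgb Hh).
Local Notation mnh := (mn Hh).

Definition tr (j : 'I_w) := traject S (mnh j) #|porbit S j|.
Definition tj (j : 'I_w) := index j (tr j).

Lemma porbit_mn j : porbit S (mnh j) = porbit S j.
Proof. by apply/eqP; rewrite eq_porbit_mem; have [] := mn_spec Hh j. Qed.

Lemma tr_mem j : j \in tr j.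
Proof.
rewrite /tr -(porbit_mn j) -porbit_traject porbit_sym; by have [] := mn_spec Hh j.
Qed.

Lemma tj_lt j : tj j < #|porbit S j|.
Proof. by rewrite /tj -{1}(size_traject S (mnh j) #|porbit S j|) index_mem tr_mem. Qed.

Lemma tjE j : (S ^+ tj j)%g (mnh j) = j.
Proof.
have := nth_index (mnh j) (tr_mem j); rewrite /tj /tr nth_traject ?tj_lt //.
by rewrite -permX.
Qed.

Lemma tj_idx j s : s < #|porbit S j| -> index ((S ^+ s)%g (mnh j)) (tr j) = s.
Proof.
move=> Hs; have U : uniq (tr j) by rewrite /tr -(porbit_mn j) uniq_traject_porbit.
have Hs' : s < size (tr j) by rewrite size_traject.
have := index_uniq (mnh j) Hs' U.
by rewrite {1}/tr (nth_traject S Hs) -permX.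
Qed.

Definition fk (x : 'I_n) : 'I_n :=
  if (insub (bl x) : option 'I_w) is Some j then
    (h ^+ tj j)%g (pt (mnh j) (Ordinal (ltn_pmod x p_gt0)))
  else x.

Lemma fk_pt j a : fk (pt j a) = (h ^+ tj j)%g (pt (mnh j) a).
Proof.
rewrite /fk bl_pt valK (_ : Ordinal _ = a) //; apply: val_inj; exact: mod_pt.
Qed.

Lemma fk_tail (x : 'I_n) : p * w <= x -> fk x = x.
Proof. by move=> Hx; rewrite /fk insubN // -leqNgt bl_ge. Qed.

Lemma bl_fk (x : 'I_n) : bl (fk x) = bl x.
Proof.
case: (ltnP x (p * w)) => Hx; last by rewrite fk_tail.
have [j [a ->]] := nontail_pt Hx.
by rewrite fk_pt (blX Hh _ (bl_pt _ _)) tjE bl_pt.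
Qed.

Lemma fk_inj : injective fk.
Proof.
move=> x y E; have Eb : bl x = bl y by rewrite -bl_fk E bl_fk.
case: (ltnP x (p * w)) => Hx; case: (ltnP y (p * w)) => Hy.
- have [j [a Ex]] := nontail_pt Hx; have [j' [b Ey]] := nontail_pt Hy.
  move: E Eb; rewrite Ex Ey => E /bl_pt_eq Ej; subst j'.
  by move: E; rewrite !fk_pt => /perm_inj /pt_inj ->.
- by move: (tail_bl Hx Hy); rewrite Eb eqxx.
- by move: (tail_bl Hy Hx); rewrite Eb eqxx.
- by move: E; rewrite !fk_tail.
Qed.

Definition kinv := perm fk_inj.
Definition kk := (kinv^-1)%g.

Lemma WR_kinv : WR kinv.
Proof.
apply/andP; split; apply/forallP => x.
  by apply/implyP => Hx; rewrite permE fk_tail.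
by apply/forallP => y; rewrite !permE !bl_fk.
Qed.

Lemma WR_kk : WR kk.
Proof. exact: WRV WR_kinv. Qed.

Lemma bl_kk (x : 'I_n) : bl (kk x) = bl x.
Proof. by rewrite /kk -{2}(permKV kinv x) [kinv _]permE bl_fk. Qed.

Definition hk := (h ^ kk)%g.

Lemma hkE (x : 'I_n) : hk x = kk (h (kinv x)).
Proof. by rewrite /hk conjgE !permM /kk invgK. Qed.

Lemma WR_hk : WR hk.
Proof. exact: WRJ Hh WR_kk. Qed.

Lemma sg_hk : sgb WR_hk = S.
Proof.
apply/permP => j; apply: val_inj; rewrite /sgb [perm _ j]permE /= hkE bl_kk.
have Hb : bl (kinv (pt j a0)) = j by rewrite permE bl_fk bl_pt.
by rewrite (bl_g Hh Hb).
Qed.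

Lemma hk_nonmin (j : 'I_w) (a : 'I_p) : ~~ orbit_min w S (S j) -> hk (pt j a) = pt (S j) a.
Proof.
move=> Hnm.
have [Hmn Hmin] := mn_spec Hh j.
have Emn : mnh (S j) = mnh j.
  apply/eqP; rewrite (mn_eq _ Hmin) porbit_mn.
  have -> : S j = (S ^+ 1)%g j by rewrite expg1.
  exact: mem_porbit.
have Hm : #|porbit S (S j)| = #|porbit S j|.
  have -> : S j = (S ^+ 1)%g j by rewrite expg1.
  by rewrite porbit_perm.
have Hlt : (tj j).+1 < #|porbit S j|.
  have := tj_lt j; rewrite leq_eqVlt => /orP [/eqP Heq|//].
  move: Hnm; have -> : S j = mnh j.
    rewrite -{1}(tjE j) -permM -expgSr Heq.
    by apply/eqP; rewrite orb_fix porbit_mn.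
  by rewrite Hmin.
have ESj : S j = (S ^+ (tj j).+1)%g (mnh j) by rewrite expgSr permM tjE.
have Etj : tj (S j) = (tj j).+1.
  rewrite /tj /tr Emn Hm {1}ESj.
  exact: (tj_idx (j:=j)).
have E1 : kinv (pt j a) = fk (pt j a) by rewrite /kinv permE.
have E2 : kinv (pt (S j) a) = fk (pt (S j) a) by rewrite /kinv permE.
rewrite hkE E1 fk_pt.
have -> : h ((h ^+ tj j)%g (pt (mnh j) a)) = kinv (pt (S j) a).
  by rewrite E2 fk_pt Etj Emn expgSr permM.
by rewrite /kk permK.
Qed.

Lemma xsp_triv (Hw : WR hk) (j : 'I_w) : ~~ orbit_min w (sgb Hw) j -> xsp Hw j = 1%g.
Proof.
rewrite (bool_irrelevance Hw WR_hk) sg_hk => Hj.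
apply/permP => a; rewrite perm1.
have := xspE WR_hk ((sgb WR_hk)^-1 j)%g a.
rewrite permKV sg_hk hk_nonmin; last by rewrite permKV.
by rewrite permKV => E; have := pt_inj E.
Qed.

End NFE.

Lemma good_nb (g : {perm 'I_n}) : #|[set j : 'I_w | good g j]| + nb g = w.
Proof.
have -> : nb g = #|~: [set j : 'I_w | good g j]|.
  by rewrite /nb; apply: eq_card => j; rewrite !inE.
by rewrite cardsC card_ord.
Qed.

Lemma cond_s (g : {perm 'I_n}) :
  cond g = ((if e == 0 then w - 1 else w) <= #|[set j : 'I_w | good g j]|).
Proof.
have := good_nb g; rewrite /cond.
case: (posnP e) => _ /= H; apply/idP/idP => H'; lia.
Qed.

Lemma main_s : calW p w e = Uset p w e (if e == 0 then w - 1 else w).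
Proof.
apply/setP => h; apply/idP/idP.
- move=> Hc; have [Hh _] := calWE h; have Hh' := Hh Hc; clear Hh.
  have Hh : WR h by case/calWE: Hc.
  rewrite inE wrE Hh /=; apply/existsP; exists (kk Hh).
  rewrite wrE WR_kk /=; apply/existsP; exists (xsp (WR_hk Hh)).
  apply/existsP; exists (sgb (WR_hk Hh)).
  rewrite wr_elt_xsp /=; apply/andP; split.
    by apply/forallP => i; apply/implyP => Hi; rewrite xsp_triv.
  rewrite (count_good (wr_elt_xsp (WR_hk Hh))); last by move=> i; exact: xsp_triv.
  by rewrite -cond_s -(key (WR_hk Hh)) /hk calW_conj // WR_kk.
- rewrite inE wrE => /andP [Hh /existsP [k /andP [Hk /existsP [xs /existsP [sgx]]]]].
  case/and3P => H1 /forallP H2 H3.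
  rewrite wrE in Hk.
  have Hg := WRJ Hh Hk.
  have Es := wr_elt_sg Hg H1.
  rewrite -(calW_conj _ Hk) (key Hg) cond_s.
  have Hw : wr_elt p w e (h ^ k)%g xs (sgb Hg) by rewrite -Es.
  have Ht : forall i, ~~ orbit_min w (sgb Hg) i -> xs i = 1%g.
    by move=> i Hi; apply/eqP; move: (H2 i); rewrite Es => /implyP; apply.
  by move: H3; rewrite Es (count_good Hw Ht).
Qed.

End S.

Unset Implicit Arguments.
Set Strict Implicit.

Theorem lemma3p1 (p w e : nat) : prime p ->
  (e = 0 -> calW p w e = Uset p w e (w - 1)) /\
  (0 < e -> calW p w e = Uset p w e w).
Proof.
move=> pP; split => He.
- by rewrite (@main_s p w e pP) He.
- by rewrite (@main_s p w e pP); case: (posnP e) He => // _ _.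
Qed.
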